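(* Let $T$ be a countable complete first-order theory with monster model $\mathfrak C$, and let $\pi(\bar x)$ be a partial type over $\emptyset$. Then the following are equivalent: (a) $\pi(\bar x)$ is amenable; (b) for every countable $\aleph_0$-homogeneous model $M\preceq\mathfrak C$ there is an $\mathrm{Aut}(M)$-invariant Keisler measure $\mu_{\bar x}$ over $M$ extending $\pi(\bar x)$; (c) the same as (b) but only for all sufficiently large such $M$ (i.e. for all countable $\aleph_0$-homogeneous $M\preceq\mathfrak C$ containing some fixed countable set $A\subseteq\mathfrak C$). If $T$ is uncountable, the same equivalences hold with ''countable, $\aleph_0$-homogeneous models'' replaced by ''strongly $\aleph_0$-homogeneous models of cardinality at most $|T|$''.
   Context: $\mathfrak C$ is $\kappa$-saturated and strongly $\kappa$-homogeneous for a large $\kappa$. For a model $N$, a Keisler measure over $N$ in variables $\bar x$ is a finitely additive probability measure on the $N$-definable sets in variables $\bar x$; it extends $\pi(\bar x)$ if it gives measure $0$ to every formula inconsistent with $\pi$; it is $\mathrm{Aut}(N)$-invariant if $\mu(\varphi(\bar x,\sigma(\bar b)))=\mu(\varphi(\bar x,\bar b))$ for all $\sigma\in\mathrm{Aut}(N)$. $\pi$ is amenable if there is an $\mathrm{Aut}(\mathfrak C)$-invariant regular Borel probability measure on $S_\pi(\mathfrak C)=\{q\in S_{\bar x}(\mathfrak C):\pi\subseteq q\}$ (equivalently, an $\mathrm{Aut}(\mathfrak C)$-invariant Keisler measure over $\mathfrak C$ extending $\pi$). *)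

(* Defs.v *)
From Stdlib Require Import Reals List.
From mathcomp Require Import all_boot.
Unset Printing Implicit Defensive.

Record signature := Signature {
  fsym : Type; fn_ar : fsym -> nat;
  rsym : Type; rl_ar : rsym -> nat }.
Arguments fn_ar {s} _.
Arguments rl_ar {s} _.

Inductive term (L : signature) : Type :=
| tvar : nat -> term L
| tapp : forall f : fsym L, ('I_(fn_ar f) -> term L) -> term L.

Inductive form (L : signature) : Type :=
| Feq : term L -> term L -> form L
| Frel : forall r : rsym L, ('I_(rl_ar r) -> term L) -> form L
| Ffalse : form L
| Fneg : form L -> form L
| Fand : form L -> form L -> form L
| Fex : nat -> form L -> form L.
Arguments tvar {L} _.
Arguments tapp {L} f _.
Arguments Feq {L} _ _.
Arguments Frel {L} r _.
Arguments Ffalse {L}.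
Arguments Fneg {L} _.
Arguments Fand {L} _ _.
Arguments Fex {L} _ _.

Fixpoint tfree {L : signature} (v : nat) (t : term L) : Prop :=
  match t with
  | tvar w => v = w
  | tapp f ts => exists i, tfree v (ts i)
  end.

Fixpoint ffree {L : signature} (v : nat) (phi : form L) : Prop :=
  match phi with
  | Feq t u => tfree v t \/ tfree v u
  | Frel r ts => exists i, tfree v (ts i)
  | Ffalse => False
  | Fneg p => ffree v p
  | Fand p q => ffree v p \/ ffree v q
  | Fex w p => v <> w /\ ffree v p
  end.

Definition sentence {L : signature} (phi : form L) : Prop := forall v, ~ ffree v phi.

Record structure (L : signature) := Structure {
  carrier :> Type;
  some_elt : carrier;
  fint : forall f : fsym L, ('I_(fn_ar f) -> carrier) -> carrier;
  rint : forall r : rsym L, ('I_(rl_ar r) -> carrier) -> Prop }.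
Arguments fint {L s} f _.
Arguments rint {L s} r _.

Fixpoint teval {L : signature} {M : structure L} (e : nat -> M) (t : term L) : M :=
  match t with
  | tvar v => e v
  | tapp f ts => fint f (fun i => teval e (ts i))
  end.

Definition upd {X : Type} (e : nat -> X) (v : nat) (d : X) : nat -> X :=
  fun w => if w == v then d else e w.

(* satisfaction in the substructure of M with domain D (quantifiers range over D);
   with D = everything this is ordinary satisfaction in M *)
Fixpoint sat_in {L : signature} {M : structure L} (D : M -> Prop)
    (e : nat -> M) (phi : form L) : Prop :=
  match phi with
  | Feq t u => teval e t = teval e u
  | Frel r ts => rint r (fun i => teval e (ts i))
  | Ffalse => False
  | Fneg p => ~ sat_in D e p
  | Fand p q => sat_in D e p /\ sat_in D e q
  | Fex w p => exists d, D d /\ sat_in D (upd e w d) p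
  end.

Definition sat {L : signature} (M : structure L) (e : nat -> M) (phi : form L) : Prop :=
  sat_in (fun _ : M => True) e phi.
Arguments sat {L} M e phi.

Definition theory (L : signature) := form L -> Prop.

Definition models {L : signature} (M : structure L) (T : theory L) : Prop :=
  forall phi, T phi -> forall e, sat M e phi.

Definition complete_theory {L : signature} (T : theory L) : Prop :=
  (forall phi, T phi -> sentence phi) /\
  (exists M : structure L, models M T) /\
  (forall phi, sentence phi ->
     (forall M : structure L, models M T -> forall e, sat M e phi) \/
     (forall M : structure L, models M T -> forall e, ~ sat M e phi)).

Definition card_le_set {X : Type} (A : X -> Prop) (Y : Type) : Prop :=
  exists f : X -> Y, forall x y, A x -> A y -> f x = f y -> x = y.
Definition type_le (Y Z : Type) : Prop :=
  exists f : Y -> Z, forall x y, f x = f y -> x = y.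
Definition card_lt_set {X : Type} (A : X -> Prop) (K : Type) : Prop :=
  card_le_set A K /\
  ~ (exists g : K -> X, (forall k, A (g k)) /\ forall k l, g k = g l -> k = l).

(* |T| := |L| + aleph_0 = |form L| *)
Definition countable_lang (L : signature) : Prop := type_le (form L) nat.
Definition card_le_T (L : signature) {X : Type} (A : X -> Prop) : Prop :=
  card_le_set A (form L).
(* kappa = |K| > |T| *)
Definition large_for (L : signature) (K : Type) : Prop :=
  type_le (form L) K /\ ~ type_le K (form L).

Definition is_aut {L : signature} {M : structure L} (D : M -> Prop) (s : M -> M) : Prop :=
  (forall x, D x -> D (s x)) /\
  (forall x y, D x -> D y -> s x = s y -> x = y) /\
  (forall y, D y -> exists x, D x /\ s x = y) /\
  (forall f a, (forall i, D (a i)) -> s (fint f a) = fint f (fun i => s (a i))) /\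
  (forall r a, (forall i, D (a i)) -> (rint r a <-> rint r (fun i => s (a i)))).

Definition saturated {L : signature} (C : structure L) (K : Type) : Prop :=
  forall A : C -> Prop, card_lt_set A K ->
  forall p : form L -> (nat -> C) -> Prop,
    (forall phi e, p phi e -> forall v, v <> 0 -> ffree v phi -> A (e v)) ->
    (forall l : list (form L * (nat -> C)),
        (forall q, In q l -> p q.1 q.2) ->
        exists c, forall q, In q l -> sat C (upd q.2 0 c) q.1) ->
    exists c, forall phi e, p phi e -> sat C (upd e 0 c) phi.

Definition strongly_homogeneous {L : signature} (C : structure L) (K : Type) : Prop :=
  forall A : C -> Prop, card_lt_set A K ->
  forall f : C -> C,
    (forall phi e, (forall v, ffree v phi -> A (e v)) ->
        (sat C e phi <-> sat C (fun v => f (e v)) phi)) ->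
    exists s, is_aut (fun _ : C => True) s /\ forall x, A x -> s x = f x.

Definition elem_sub {L : signature} {C : structure L} (M : C -> Prop) : Prop :=
  (exists x, M x) /\
  (forall f a, (forall i, M (a i)) -> M (fint f a)) /\
  (forall phi e, (forall v, ffree v phi -> M (e v)) -> (sat_in M e phi <-> sat C e phi)).

Definition tuple_in {L : signature} {C : structure L} (M : C -> Prop) (n : nat)
  (a : nat -> C) : Prop := forall i, i < n -> M (a i).

Definition same_type {L : signature} {C : structure L} (M : C -> Prop) (n : nat)
  (a b : nat -> C) : Prop :=
  forall phi : form L, (forall v, ffree v phi -> v < n) ->
    (sat_in M a phi <-> sat_in M b phi).

Definition aleph0_homogeneous {L : signature} {C : structure L} (M : C -> Prop) : Prop :=
  forall n a b, tuple_in M n a -> tuple_in M n b -> same_type M n a b ->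
  forall c, M c -> exists d, M d /\ same_type M n.+1 (upd a n c) (upd b n d).

Definition strongly_aleph0_homogeneous {L : signature} {C : structure L}
  (M : C -> Prop) : Prop :=
  forall n a b, tuple_in M n a -> tuple_in M n b -> same_type M n a b ->
  exists s, is_aut M s /\ forall i, i < n -> s (a i) = b i.

Definition countable_set {X : Type} (A : X -> Prop) : Prop := card_le_set A nat.

(* the tuple x = (x_0..x_{n-1}) occupies variables 0..n-1; parameters are the
   values of the environment e at variables >= n *)
Definition merge {X : Type} {n : nat} (a : 'I_n -> X) (e : nat -> X) : nat -> X :=
  fun v => if @insub nat (fun k => k < n) 'I_n v is Some j then a j else e v.

Definition params_in {L : signature} {C : structure L} (M : C -> Prop) (n : nat)
  (phi : form L) (e : nat -> C) : Prop :=
  forall v, n <= v -> ffree v phi -> M (e v).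

Definition defset {L : signature} {C : structure L} (M : C -> Prop) (n : nat)
  (phi : form L) (e : nat -> C) : ('I_n -> C) -> Prop :=
  fun a => (forall i, M (a i)) /\ sat_in M (merge a e) phi.

Definition definable {L : signature} {C : structure L} (M : C -> Prop) (n : nat)
  (X : ('I_n -> C) -> Prop) : Prop :=
  exists phi e, params_in M n phi e /\ forall a, X a <-> defset M n phi e a.

Definition keisler_measure {L : signature} {C : structure L} (M : C -> Prop) (n : nat)
  (mu : (('I_n -> C) -> Prop) -> R) : Prop :=
  (forall X Y, definable M n X -> definable M n Y -> (forall a, X a <-> Y a) ->
      mu X = mu Y) /\
  (forall X, definable M n X -> Rle R0 (mu X)) /\
  mu (fun a => forall i, M (a i)) = R1 /\
  (forall X Y, definable M n X -> definable M n Y -> (forall a, ~ (X a /\ Y a)) ->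
      mu (fun a => X a \/ Y a) = Rplus (mu X) (mu Y)).

Definition consistent_with {L : signature} {C : structure L} (n : nat)
  (pi : form L -> Prop) (phi : form L) (e : nat -> C) : Prop :=
  exists a : 'I_n -> C, (forall psi, pi psi -> sat C (merge a e) psi) /\
                        sat C (merge a e) phi.

Definition extends_type {L : signature} {C : structure L} (M : C -> Prop) (n : nat)
  (pi : form L -> Prop) (mu : (('I_n -> C) -> Prop) -> R) : Prop :=
  forall phi e, params_in M n phi e -> ~ consistent_with n pi phi e ->
    mu (defset M n phi e) = R0.

Definition aut_invariant {L : signature} {C : structure L} (M : C -> Prop) (n : nat)
  (mu : (('I_n -> C) -> Prop) -> R) : Prop :=
  forall s, is_aut M s -> forall phi e, params_in M n phi e ->
    mu (defset M n phi (fun v => s (e v))) = mu (defset M n phi e).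

Definition inv_keisler_ext {L : signature} {C : structure L} (M : C -> Prop) (n : nat)
  (pi : form L -> Prop) : Prop :=
  exists mu, keisler_measure M n mu /\ extends_type M n pi mu /\ aut_invariant M n mu.

(* amenability of pi, via the equivalent Keisler-measure-over-C formulation *)
Definition amenable {L : signature} (C : structure L) (n : nat) (pi : form L -> Prop) : Prop :=
  inv_keisler_ext (fun _ : C => True) n pi.

(* Main.v *)
From Stdlib Require Import Reals List Lra Lia Classical ClassicalEpsilon FunctionalExtensionality.
From mathcomp Require Import all_boot.
From mathcomp Require filter classical_sets.
Require Import Defs.
Set Implicit Arguments. Unset Strict Implicit.

Section Syntax.
Variable L : signature.

Fixpoint fvt (t : term L) : seq nat :=
  match t with
  | tvar v => [:: v]
  | tapp f ts => flatten [seq fvt (ts i) | i <- enum 'I_(fn_ar f)]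
  end.

Fixpoint fvf (phi : form L) : seq nat :=
  match phi with
  | Feq t u => fvt t ++ fvt u
  | Frel r ts => flatten [seq fvt (ts i) | i <- enum 'I_(rl_ar r)]
  | Ffalse => [::]
  | Fneg p => fvf p
  | Fand p q => fvf p ++ fvf q
  | Fex w p => [seq v <- fvf p | v != w]
  end.

Lemma flat_spec k (g : 'I_k -> seq nat) v :
  (v \in flatten [seq g i | i <- enum 'I_k]) <-> exists i, v \in g i.
Proof.
split.
- move/flattenP=> [s /mapP [i _ ->] vs]; by exists i.
- move=> [i vi]; apply/flattenP; exists (g i) => //; apply/mapP; exists i => //.
  by rewrite mem_enum.
Qed.

Lemma fvt_spec t v : tfree v t <-> v \in fvt t.
Proof.
elim: t => [w|f ts IH] /=.
- by rewrite inE; split => [->|/eqP ->].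
- rewrite flat_spec; split => [[i /IH h]|[i /IH h]]; by exists i.
Qed.

Lemma fvf_spec phi v : ffree v phi <-> v \in fvf phi.
Proof.
elim: phi => [t u|r ts| |p IH|p IHp q IHq|w p IH] /=.
- rewrite mem_cat !fvt_spec; exact: (rwP orP).
- rewrite flat_spec; split => [[i /fvt_spec h]|[i /fvt_spec h]]; by exists i.
- by [].
- exact: IH.
- rewrite mem_cat IHp IHq; exact: (rwP orP).
- rewrite mem_filter IH; split => [[/eqP ne ->]|/andP [/eqP ? ->]] //; by rewrite ne.
Qed.

Lemma teval_coinc (M : structure L) (e e' : nat -> M) t :
  (forall v, tfree v t -> e v = e' v) -> teval e t = teval e' t.
Proof.
elim: t => [w|f ts IH] /= h; first exact: h.
congr (fint f _); apply: functional_extensionality => i; apply: IH => v hv.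
apply: h; by exists i.
Qed.

Lemma sat_coinc (M : structure L) (D : M -> Prop) phi : forall (e e' : nat -> M),
  (forall v, ffree v phi -> e v = e' v) -> (sat_in D e phi <-> sat_in D e' phi).
Proof.
elim: phi => [t u|r ts| |p IH|p IHp q IHq|w p IH] e e' h /=.
- rewrite (@teval_coinc _ e e' t) ?(@teval_coinc _ e e' u) //.
  + move=> v hv; apply: h; by right.
  + move=> v hv; apply: h; by left.
- have -> : (fun i => teval e (ts i)) = (fun i => teval e' (ts i)) => //.
  apply: functional_extensionality => i; apply: teval_coinc => v hv; apply: h; by exists i.
- by [].
- by rewrite (IH e e').
- rewrite (IHp e e') ?(IHq e e') // => v hv; apply: h; by [right|left].
- split=> [[d [Dd hd]]|[d [Dd hd]]]; exists d; split => //.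
  + rewrite -(IH (upd e w d)) // => v hv; rewrite /upd; case: eqP => // /eqP ne.
    apply: h; split => //; exact/eqP.
  + rewrite (IH _ (upd e' w d)) // => v hv; rewrite /upd; case: eqP => // /eqP ne.
    apply: h; split => //; exact/eqP.
Qed.

Fixpoint tren (r : nat -> nat) (t : term L) : term L :=
  match t with
  | tvar v => tvar (r v)
  | tapp f ts => tapp f (fun i => tren r (ts i))
  end.

Fixpoint fren (r : nat -> nat) (phi : form L) : form L :=
  match phi with
  | Feq t u => Feq (tren r t) (tren r u)
  | Frel s ts => Frel s (fun i => tren r (ts i))
  | Ffalse => Ffalse
  | Fneg p => Fneg (fren r p)
  | Fand p q => Fand (fren r p) (fren r q)
  | Fex w p => Fex (r w) (fren r p)
  end.

Lemma teval_ren (M : structure L) (e : nat -> M) r t :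
  teval e (tren r t) = teval (fun v => e (r v)) t.
Proof.
elim: t => [w|f ts IH] //=; congr (fint f _); apply: functional_extensionality => i; exact: IH.
Qed.

Lemma sat_ren (M : structure L) (D : M -> Prop) r (rI : injective r) phi :
  forall e, sat_in D e (fren r phi) <-> sat_in D (fun v => e (r v)) phi.
Proof.
elim: phi => [t u|s ts| |p IH|p IHp q IHq|w p IH] e /=.
- by rewrite !teval_ren.
- have -> // : (fun i => teval e (tren r (ts i))) = (fun i => teval (fun v => e (r v)) (ts i)).
  apply: functional_extensionality => i; exact: teval_ren.
- by [].
- by rewrite IH.
- by rewrite IHp IHq.
- split=> [[d [Dd hd]]|[d [Dd hd]]]; exists d; split => //.
  + move: hd; rewrite IH; congr (sat_in D _ p); apply: functional_extensionality => v.
    rewrite /upd; case: (v =P w) => [->|ne]; first by rewrite eqxx.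
    case: (r v =P r w) => // /rI //.
  + rewrite IH; move: hd; congr (sat_in D _ p); apply: functional_extensionality => v.
    rewrite /upd; case: (v =P w) => [->|ne]; first by rewrite eqxx.
    case: (r v =P r w) => // /rI //.
Qed.

Lemma tfree_ren r t v : tfree v (tren r t) -> exists u, tfree u t /\ v = r u.
Proof.
elim: t => [w|f ts IH] /=; first by move=> ->; exists w.
move=> [i /IH [u [hu ->]]]; exists u; split => //; by exists i.
Qed.

Lemma ffree_ren r phi v : ffree v (fren r phi) -> exists u, ffree u phi /\ v = r u.
Proof.
elim: phi v => [t u|s ts| |p IH|p IHp q IHq|w p IH] v /=.
- move=> [/tfree_ren [x [hx ->]]|/tfree_ren [x [hx ->]]]; exists x; split => //; by [left|right].
- move=> [i /tfree_ren [x [hx ->]]]; exists x; split => //; by exists i.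
- by [].
- exact: IH.
- move=> [/IHp [x [hx ->]]|/IHq [x [hx ->]]]; exists x; split => //; by [left|right].
- move=> [ne /IH [x [hx ex]]]; exists x; split => //; split => //; move=> ewx; apply: ne.
  by rewrite ex ewx.
Qed.

Lemma teval_aut (M : structure L) (D : M -> Prop) s (Hs : is_aut D s)
  (Dcl : forall f a, (forall i, D (a i)) -> D (fint f a)) (e : nat -> M) t :
  (forall v, tfree v t -> D (e v)) ->
  D (teval e t) /\ teval (fun v => s (e v)) t = s (teval e t).
Proof.
case: Hs => [HD [Hinj [Hsur [Hf Hr]]]].
elim: t => [w|f ts IH] /= h; first by split => //; apply: h.
have IH' : forall i, D (teval e (ts i)) /\ teval (fun v => s (e v)) (ts i) = s (teval e (ts i)).
  move=> i; apply: IH => v hv; apply: h; by exists i.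
split; first by apply: Dcl => i; case: (IH' i).
rewrite Hf; last by move=> i; case: (IH' i).
congr (fint f _); apply: functional_extensionality => i; by case: (IH' i).
Qed.

Lemma sat_aut (M : structure L) (D : M -> Prop) s (Hs : is_aut D s)
  (Dcl : forall f a, (forall i, D (a i)) -> D (fint f a)) phi :
  forall (e : nat -> M), (forall v, ffree v phi -> D (e v)) ->
  (sat_in D e phi <-> sat_in D (fun v => s (e v)) phi).
Proof.
have Hs' := Hs; case: Hs' => [HD [Hinj [Hsur [Hf Hr]]]].
elim: phi => [t u|r ts| |p IH|p IHp q IHq|w p IH] e h /=.
- have [Dt ->] := @teval_aut _ _ _ Hs Dcl e t (fun v hv => h v (or_introl hv)).
  have [Du ->] := @teval_aut _ _ _ Hs Dcl e u (fun v hv => h v (or_intror hv)).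
  split => [->//|]; exact: Hinj.
- have H' : forall i, D (teval e (ts i)) /\
     teval (fun v => s (e v)) (ts i) = s (teval e (ts i)).
    move=> i; apply: teval_aut => // v hv; apply: h; by exists i.
  have -> : (fun i => teval (fun v => s (e v)) (ts i)) = (fun i => s (teval e (ts i))).
    apply: functional_extensionality => i; by case: (H' i).
  apply: Hr => i; by case: (H' i).
- by [].
- by rewrite (IH e h).
- have h1 : forall v, ffree v p -> D (e v) by move=> v hv; apply: h; left.
  have h2 : forall v, ffree v q -> D (e v) by move=> v hv; apply: h; right.
  by rewrite (IHp e h1) (IHq e h2).
- have E : forall d, (fun v => s (upd e w d v)) = upd (fun v => s (e v)) w (s d).
    move=> d; apply: functional_extensionality => v; rewrite /upd; by case: eqP.
  have hu : forall d, D d -> forall v, ffree v p -> D (upd e w d v).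
    move=> d Dd v hv; rewrite /upd; case: eqP => [//|/eqP ne]; apply: h; split => //.
    exact/eqP.
  split=> [[d [Dd hd]]|[d [Dd hd]]].
  + exists (s d); split; first exact: HD.
    by rewrite -E -(IH (upd e w d) (hu d Dd)).
  + have [x [Dx ex]] := Hsur d Dd; subst d.
    exists x; split => //; by rewrite (IH (upd e w x) (hu x Dx)) E.
Qed.

Lemma TV (M : structure L) (D : M -> Prop)
  (W : forall w p e, (forall v, ffree v (Fex w p) -> D (e v)) -> sat M e (Fex w p) ->
        exists d, D d /\ sat M (upd e w d) p) :
  forall phi e, (forall v, ffree v phi -> D (e v)) -> (sat_in D e phi <-> sat M e phi).
Proof.
rewrite /sat; elim => [t u|r ts| |p IH|p IHp q IHq|w p IH] e h /=; try by [].
- by rewrite (IH e h).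
- have h1 : forall v, ffree v p -> D (e v) by move=> v hv; apply: h; left.
  have h2 : forall v, ffree v q -> D (e v) by move=> v hv; apply: h; right.
  by rewrite (IHp e h1) (IHq e h2).
- have hu : forall d, D d -> forall v, ffree v p -> D (upd e w d v).
    move=> d Dd v hv; rewrite /upd; case: eqP => [//|/eqP ne]; apply: h; split => //.
    exact/eqP.
  split=> [[d [Dd hd]]|hd].
  + exists d; split => //; by rewrite -(IH (upd e w d) (hu d Dd)).
  + have [d [Dd hd']] := W w p e h hd.
    exists d; split => //; by rewrite (IH (upd e w d) (hu d Dd)).
Qed.

End Syntax.

Section Sem.
Variable L : signature.
Variable C : structure L.

Fixpoint Exs (vs : seq nat) (p : form L) : form L :=
  match vs with [::] => p | v :: vs' => Fex v (Exs vs' p) end.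

Fixpoint upds {X : Type} (E : nat -> X) (vs : seq nat) (ds : seq X) : nat -> X :=
  match vs, ds with
  | v :: vs', d :: ds' => upds (upd E v d) vs' ds'
  | _, _ => E
  end.

Lemma sat_Exs (D : C -> Prop) vs p : forall (E : nat -> C),
  sat_in D E (Exs vs p) <->
  exists ds, size ds = size vs /\ (forall d, In d ds -> D d) /\ sat_in D (upds E vs ds) p.
Proof.
elim: vs => [|v vs IH] E /=.
- split=> [h|[ds [s0 [_ h]]]]; first by exists [::].
  by case: ds s0 h.
- split=> [[d [Dd /IH [ds [sz [hD h]]]]]|[[|d ds] [//= [sz] [hD h]]]].
  + exists (d :: ds); split; first by rewrite /= sz.
    split => // x /= [<-|/hD] //.
  + exists d; split; first by apply: hD; left.
    apply/IH; exists ds; split => //; split => // x hx; apply: hD; by right.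
Qed.

Lemma upds_map {X : Type} vs (E : nat -> X) h w :
  upds E vs (map h vs) w = if w \in vs then h w else E w.
Proof.
elim: vs E => [|v vs IH] E //=.
rewrite IH inE /upd; case: (w =P v) => [->|ne] /=; first by case: (v \in vs).
by [].
Qed.

Lemma upds_notin {X : Type} vs ds (E : nat -> X) w :
  w \notin vs -> upds E vs ds w = E w.
Proof.
elim: vs ds E => [|v vs IH] [|d ds] E //=.
rewrite inE negb_or => /andP [ne nin]; rewrite IH // /upd; by case: eqP ne => // ->; rewrite eqxx.
Qed.

Lemma ffree_Exs vs p v : ffree v (Exs vs p) <-> ffree v p /\ v \notin vs.
Proof.
elim: vs => [|w vs IH] //=; first by split => [h|[h _]].
rewrite IH inE negb_or; split => [[ne [h nin]]|[h /andP [ne nin]]].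
- split => //; rewrite nin andbT; apply/eqP => //.
- split; first exact/eqP.
  by split.
Qed.

Lemma merge_lt n (X : Type) (a : 'I_n -> X) e v (h : v < n) : merge a e v = a (Ordinal h).
Proof. rewrite /merge; case: insubP => [j _ ej|]; last by rewrite h.
by congr a; apply: val_inj. Qed.

Lemma merge_ge n (X : Type) (a : 'I_n -> X) e v : n <= v -> merge a e v = e v.
Proof. move=> h; rewrite /merge; case: insubP => [j hj ej|//].
by move: hj; rewrite ltnNge h. Qed.

Lemma In_nth (X : Type) (x0 : X) s i : i < size s -> In (nth x0 s i) s.
Proof.
elim: s i => [|x s IH] [|i] //= h; [by left|right; exact: IH].
Qed.

Lemma exs_iota (D : C -> Prop) n p (E : nat -> C) :
  sat_in D E (Exs (iota 0 n) p) <->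
  exists a : 'I_n -> C, (forall i, D (a i)) /\ sat_in D (merge a E) p.
Proof.
rewrite sat_Exs; split => [[ds [sz [hD h]]]|[a [hD h]]].
- rewrite size_iota in sz.
  exists (fun i => nth (some_elt _ C) ds i); split.
  + move=> i; apply: hD; apply: In_nth; rewrite sz; exact: ltn_ord.
  + move: h; congr (sat_in D _ p); apply: functional_extensionality => v.
    rewrite {1}(_ : ds = map (nth (some_elt _ C) ds) (iota 0 n)); last first.
      by rewrite -sz -/(mkseq _ _) mkseq_nth.
    rewrite upds_map mem_iota add0n /=.
    case: (ltnP v n) => hv; first by rewrite merge_lt.
    by rewrite merge_ge.
- exists (map (merge a E) (iota 0 n)); split; first by rewrite !size_map.
  split.
  + move=> d /in_map_iff [v [<- /in_seq hv]].
    have hv' : v < n by apply/ltP; lia.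
    rewrite merge_lt; exact: hD.
  + move: h; congr (sat_in D _ p); apply: functional_extensionality => v.
    rewrite upds_map mem_iota add0n /=.
    case: (ltnP v n) => hv //; by rewrite merge_ge.
Qed.

End Sem.

Section Comb.
Variable L : signature.
Variable C : structure L.

Definition fbound (phi : form L) := (foldr maxn 0 (fvf phi)).+1.

Lemma fbound_spec phi v : ffree v phi -> v < fbound phi.
Proof.
rewrite fvf_spec /fbound ltnS; elim: (fvf phi) => [|w s IH] //=.
rewrite inE => /orP [/eqP ->|/IH h]; first exact: leq_maxl.
exact: leq_trans h (leq_maxr _ _).
Qed.

Definition rr (n N v : nat) := if v < n then v else v + N.
Definition Eenv (n N : nat) (e e' : nat -> C) v := if v < n + N then e v else e' (v - N).

Lemma rr_inj n N : injective (rr n N).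
Proof.
move=> v w; rewrite /rr; case: (ltnP v n) => hv; case: (ltnP w n) => hw //.
- move=> e; subst v; move: hv; rewrite ltnNge; by rewrite (leq_trans hw (leq_addr _ _)).
- move=> e; subst w; move: hw; rewrite ltnNge; by rewrite (leq_trans hv (leq_addr _ _)).
- by move/addIn.
Qed.

Lemma comb2 (D : C -> Prop) n N e e' psi (a : 'I_n -> C) :
  sat_in D (merge a (Eenv n N e e')) (fren (rr n N) psi) <-> sat_in D (merge a e') psi.
Proof.
rewrite sat_ren; last exact: rr_inj.
have -> // : (fun v => merge a (Eenv n N e e') (rr n N v)) = merge a e'.
apply: functional_extensionality => v; rewrite /rr.
case: (ltnP v n) => hv; first by rewrite !merge_lt.
rewrite !merge_ge ?(leq_trans hv (leq_addr _ _)) // /Eenv ltn_add2r ltnNge hv /=.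
by rewrite addnK.
Qed.

Lemma comb1 (D : C -> Prop) n N e e' phi (a : 'I_n -> C) :
  fbound phi <= N ->
  sat_in D (merge a (Eenv n N e e')) phi <-> sat_in D (merge a e) phi.
Proof.
move=> hN; apply: sat_coinc => v /fbound_spec hv.
case: (ltnP v n) => h; first by rewrite !merge_lt.
rewrite !merge_ge // /Eenv; suff -> : v < n + N by [].
exact: leq_trans (leq_trans hv hN) (leq_addl _ _).
Qed.

Lemma comb_par1 n N (e e' : nat -> C) (phi : form L) v :
  fbound phi <= N -> ffree v phi -> Eenv n N e e' v = e v.
Proof.
move=> hN /fbound_spec hv; rewrite /Eenv; suff -> : v < n + N by [].
exact: leq_trans (leq_trans hv hN) (leq_addl _ _).
Qed.

Lemma comb_par2 n N (e e' : nat -> C) (psi : form L) v :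
  n <= v -> ffree v (fren (rr n N) psi) ->
  exists u, n <= u /\ ffree u psi /\ Eenv n N e e' v = e' u.
Proof.
move=> hv /ffree_ren [u [hu ev]]; move: ev; rewrite /rr.
case: (ltnP u n) => h ev; first by subst v; move: hv; rewrite leqNgt h.
exists u; split => //; split => //; subst v.
by rewrite /Eenv ltn_add2r ltnNge h /= addnK.
Qed.

Lemma elem_sat (M : C -> Prop) (HM : elem_sub M) phi e :
  (forall v, ffree v phi -> M (e v)) -> (sat_in M e phi <-> sat C e phi).
Proof. case: HM => [_ [_ h]]; exact: h. Qed.

Lemma transfer (M : C -> Prop) (HM : elem_sub M) n chi E :
  params_in M n chi E ->
  (exists a : 'I_n -> C, sat C (merge a E) chi) ->
  exists a : 'I_n -> C, (forall i, M (a i)) /\ sat_in M (merge a E) chi.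
Proof.
move=> hp [a ha].
have h1 : sat C E (Exs (iota 0 n) chi).
  rewrite /sat exs_iota; by exists a.
apply/exs_iota; rewrite elem_sat //.
move=> v /ffree_Exs [hv]; rewrite mem_iota add0n /= -leqNgt => h; exact: hp.
Qed.

Lemma restr (M : C -> Prop) (HM : elem_sub M) n phi e :
  params_in M n phi e -> forall a,
  defset M n phi e a <-> (forall i, M (a i)) /\ sat C (merge a e) phi.
Proof.
move=> hp a; rewrite /defset.
suff H : (forall i, M (a i)) -> forall v, ffree v phi -> M (merge a e v).
  split => [[ha h]|[ha h]]; split => //.
  - by rewrite -(elem_sat HM (H ha)).
  - by rewrite (elem_sat HM (H ha)).
move=> ha v hv; case: (ltnP v n) => h'; [rewrite merge_lt | rewrite merge_ge //; exact: hp].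
exact: ha.
Qed.

Definition Fimp (p q : form L) := Fneg (Fand p (Fneg q)).
Definition For (p q : form L) := Fneg (Fand (Fneg p) (Fneg q)).
Definition Fiff (p q : form L) := Fand (Fimp p q) (Fimp q p).

Lemma params_comb (M : C -> Prop) n phi e psi e' :
  params_in M n phi e -> params_in M n psi e' ->
  params_in M n phi (Eenv n (fbound phi) e e') /\
  params_in M n (fren (rr n (fbound phi)) psi) (Eenv n (fbound phi) e e').
Proof.
move=> h1 h2; split.
- move=> v hv fv; rewrite (@comb_par1 n (fbound phi) e e' phi v (leqnn _) fv); exact: h1.
- move=> v hv fv; have [u [hu [fu ->]]] := comb_par2 e e' hv fv; exact: h2.
Qed.

Lemma WD (M : C -> Prop) (HM : elem_sub M) n (phi : form L) e (psi : form L) e' :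
  params_in M n phi e -> params_in M n psi e' ->
  (forall a, defset M n phi e a <-> defset M n psi e' a) ->
  forall a : 'I_n -> C, sat C (merge a e) phi <-> sat C (merge a e') psi.
Proof.
move=> h1 h2 heq a; apply: NNPP => hna.
set N := fbound phi; set E := Eenv n N e e'; set psi' := fren (rr n N) psi.
have [p1 p2] := params_comb h1 h2.
have hp : params_in M n (Fneg (Fiff phi psi')) E.
  move=> v hv; rewrite /Fiff /Fimp /= => [[[fv|fv]|[fv|fv]]]; by [apply: p1|apply: p2].
have hex : exists a : 'I_n -> C, sat C (merge a E) (Fneg (Fiff phi psi')).
  exists a; rewrite /sat /Fiff /Fimp /=.
  rewrite (comb1 _ _ _ _ (leqnn N)) comb2.
  move=> [h3 h4]; apply: hna; split => p; apply: NNPP => nq; [apply: h3|apply: h4]; done.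
have [a' [ha' hs]] := transfer HM hp hex.
move: hs; rewrite /Fiff /Fimp /= (comb1 _ _ _ _ (leqnn N)) comb2.
have := heq a'; rewrite /defset; tauto.
Qed.

Lemma Disj (M : C -> Prop) (HM : elem_sub M) n (phi : form L) e (psi : form L) e' :
  params_in M n phi e -> params_in M n psi e' ->
  (forall a, ~ (defset M n phi e a /\ defset M n psi e' a)) ->
  forall a : 'I_n -> C, ~ (sat C (merge a e) phi /\ sat C (merge a e') psi).
Proof.
move=> h1 h2 heq a ha.
set N := fbound phi; set E := Eenv n N e e'; set psi' := fren (rr n N) psi.
have [p1 p2] := params_comb h1 h2.
have hp : params_in M n (Fand phi psi') E.
  move=> v hv /= [fv|fv]; by [apply: p1|apply: p2].
have hex : exists a : 'I_n -> C, sat C (merge a E) (Fand phi psi').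
  exists a; rewrite /sat /=.
  by rewrite (comb1 _ _ _ _ (leqnn N)) comb2.
have [a' [ha' hs]] := transfer HM hp hex.
move: hs; rewrite /= (comb1 _ _ _ _ (leqnn N)) comb2.
have := heq a'; rewrite /defset; tauto.
Qed.

End Comb.

Section Gen.
Variable L : signature.
Variable C : structure L.

Lemma defset_def (D : C -> Prop) n (phi : form L) e :
  params_in D n phi e -> definable D n (defset D n phi e).
Proof. move=> h; by exists phi, e. Qed.

Lemma km_ext (D : C -> Prop) n mu X Y :
  keisler_measure D n mu -> definable D n X -> (forall a, X a <-> Y a) -> mu X = mu Y.
Proof.
move=> [h _] dX hXY; apply: h => //.
case: dX => [phi [e [hp hX]]]; exists phi, e; split => // a; rewrite -hXY; exact: hX.
Qed.

Lemma ptrue n (phi : form L) e : params_in (fun _ : C => True) n phi e.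
Proof. by []. Qed.

Lemma card_lt (K : Type) (HK : large_for L K) (X : C -> Prop) :
  card_le_set X (form L) -> card_lt_set X K.
Proof.
case: HK => [[iK iKI] nK] [iX iXI]; split.
- exists (fun x => iK (iX x)) => x y hx hy /iKI; exact: iXI.
- move=> [g [hg gI]]; apply: nK; exists (fun k => iX (g k)) => k l h; apply: gI.
  exact: iXI.
Qed.

Lemma aut_elem (s : C -> C) : is_aut (fun _ => True) s ->
  forall (phi : form L) e, sat C e phi <-> sat C (fun v => s (e v)) phi.
Proof.
move=> hs phi e; apply: sat_aut => //.
Qed.

Lemma elem_fcl (M : C -> Prop) : elem_sub M ->
  forall f a, (forall i, M (a i)) -> M (fint f a).
Proof. by case=> [_ []]. Qed.

Lemma aut_ext (K : Type) (HK : large_for L K) (Hsh : strongly_homogeneous C K)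
  (M : C -> Prop) (HM : elem_sub M) (cM : card_le_set M (form L)) s :
  is_aut M s -> exists t, is_aut (fun _ => True) t /\ forall x, M x -> t x = s x.
Proof.
move=> hs; apply: Hsh; first exact: card_lt.
move=> phi e he.
have he' : forall v, ffree v phi -> M (s (e v)) by move=> v hv; case: hs => [h _]; apply: h; exact: he.
rewrite -(elem_sat HM he) -(elem_sat HM he').
exact: (sat_aut hs (elem_fcl HM) he).
Qed.

End Gen.

Section Conv.
Variable L : signature.
Variable C : structure L.
Let x0 := some_elt _ C.

Definition Pmap (l1 l2 : seq C) : Prop :=
  size l1 = size l2 /\ exists f : C -> C,
    (forall i, i < size l1 -> f (nth x0 l1 i) = nth x0 l2 i) /\
    (forall (phi : form L) e, (forall v, ffree v phi -> In (e v) l1) ->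
       (sat C e phi <-> sat C (fun v => f (e v)) phi)).

Fixpoint Ands (ps : seq (form L)) : form L :=
  match ps with [::] => Fneg Ffalse | p :: ps' => Fand p (Ands ps') end.

Lemma sat_Ands (D : C -> Prop) (E : nat -> C) (h : nat -> form L) l :
  sat_in D E (Ands (map h l)) <-> forall v, v \in l -> sat_in D E (h v).
Proof.
elim: l => [|u l IH] /=; first by split => // _ [].
rewrite IH; split => [[h1 h2] v|H].
- rewrite inE => /orP [/eqP ->|hv] //; exact: h2.
- split; first by apply: H; rewrite inE eqxx.
  move=> v hv; apply: H; by rewrite inE hv orbT.
Qed.

Lemma ffree_Ands (h : nat -> form L) l v :
  ffree v (Ands (map h l)) -> exists u, u \in l /\ ffree v (h u).
Proof.
elim: l => [|u l IH] /=; first by [].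
move=> [fv|/IH [w [hw fw]]]; first by exists u; rewrite inE eqxx.
by exists w; rewrite inE hw orbT.
Qed.

Definition psiF (N : nat) (h : nat -> nat) (phi : form L) : form L :=
  Exs (map (fun u => u + N) (fvf phi))
    (Fand (Ands (map (fun v => Feq (tvar (v + N)) (tvar (h v))) (fvf phi)))
          (fren (fun u => u + N) phi)).

Lemma notin_shift N (h : nat -> nat) l v : h v < N -> h v \notin map (fun u => u + N) l.
Proof.
move=> hv; apply/mapP => [[u _ eu]]; move: hv; by rewrite eu ltnNge leq_addl.
Qed.

Lemma psiF_sem N (h : nat -> nat) (phi : form L) (c e' : nat -> C) :
  (forall v, v \in fvf phi -> h v < N /\ c (h v) = e' v) ->
  (sat C c (psiF N h phi) <-> sat C e' phi).
Proof.
move=> H; rewrite /sat /psiF sat_Exs.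
have rI : injective (fun u => u + N) by move=> x y /addIn.
split => [[ds [sz [_ [h1 h2]]]]|hs].
- rewrite -/(@sat_in L C) in h1 h2. move: h2; rewrite sat_ren // => h2.
  set E' := upds c _ ds in h1 h2.
  have HH : forall v, ffree v phi -> E' (v + N) = e' v.
    move=> v /fvf_spec fv.
    move: h1 => /(sat_Ands) /(_ v fv) /=.
    have [hv ec] := H v fv.
    rewrite /E' (upds_notin _ _ (notin_shift _ hv)) ec => ->; by [].
  exact: (proj1 (sat_coinc _ HH) h2).
- exists (map (fun u => e' (u - N)) (map (fun u => u + N) (fvf phi))).
  split; first by rewrite size_map.
  split => //.
  have hE : forall v, v \in fvf phi ->
     upds c (map (fun u => u + N) (fvf phi)) (map (fun u => e' (u - N)) (map (fun u => u + N) (fvf phi))) (v + N) = e' v.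
    move=> v fv; rewrite upds_map.
    have -> : (v + N) \in map (fun u => u + N) (fvf phi) by apply/mapP; exists v.
    by rewrite addnK.
  split.
  + apply/sat_Ands => v fv /=; rewrite hE // upds_notin; last first.
      by apply: notin_shift; case: (H v fv).
    by case: (H v fv).
  + rewrite sat_ren //.
    have HH : forall v, ffree v phi -> e' v = upds c (map (fun u => u + N) (fvf phi)) (map (fun u => e' (u - N)) (map (fun u => u + N) (fvf phi))) (v + N).
      move=> v /fvf_spec fv; by rewrite hE.
    exact: (proj1 (sat_coinc _ HH) hs).
Qed.

Lemma psiF_free N (h : nat -> nat) (phi : form L) v :
  (forall u, u \in fvf phi -> h u < N) ->
  ffree v (psiF N h phi) -> v < N.
Proof.
move=> H /ffree_Exs [[fv|fv] nin].
- have [u [hu /= [e1|e2]]] := ffree_Ands fv.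
  + subst v; case/negP: nin; by apply/mapP; exists u.
  + subst v; exact: H.
- have [u [fu eu]] := ffree_ren fv; subst v.
  case/negP: nin; apply/mapP; exists u => //; exact/fvf_spec.
Qed.

Lemma In_map_iota (a : nat -> C) n x : In x (map a (iota 0 n)) <-> exists i, i < n /\ a i = x.
Proof.
rewrite in_map_iff; split => [[i [<- /in_seq hi]]|[i [hi <-]]]; exists i; split => //.
- apply/ltP; lia.
- apply/in_seq; move/ltP: hi; lia.
Qed.

Lemma nth_map_iota (a : nat -> C) n i : i < n -> nth x0 (map a (iota 0 n)) i = a i.
Proof.
move=> hi; rewrite (nth_map 0); last by rewrite size_iota.
by rewrite nth_iota.
Qed.

Lemma same_Pmap (M : C -> Prop) (HM : elem_sub M) n (a b : nat -> C) :
  tuple_in M n a -> tuple_in M n b -> same_type M n a b ->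
  Pmap (map a (iota 0 n)) (map b (iota 0 n)).
Proof.
move=> ha hb hs.
have cons : forall i j, i < n -> j < n -> a i = a j -> b i = b j.
  move=> i j hi hj eij.
  have := hs (Feq (tvar i) (tvar j)); rewrite /=.
  move=> H; apply/H => //; move=> v [->|->] //.
pose gidx x := epsilon (inhabits 0) (fun i => i < n /\ a i = x).
have gidx_spec : forall i, i < n -> gidx (a i) < n /\ a (gidx (a i)) = a i.
  move=> i hi; apply: (epsilon_spec (inhabits 0) (fun j => j < n /\ a j = a i)).
  by exists i.
split; first by rewrite !size_map.
exists (fun x => b (gidx x)); split.
- move=> i; rewrite size_map size_iota => hi; rewrite !nth_map_iota //.
  have [h1 h2] := gidx_spec i hi; exact: cons.
- move=> phi e he.
  pose g v := gidx (e v).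
  have Hg : forall v, v \in fvf phi -> g v < n /\ a (g v) = e v.
    move=> v /fvf_spec /he /In_map_iota [i [hi ei]].
    rewrite /g -ei; exact: gidx_spec.
  rewrite -(psiF_sem (c:=a) Hg).
  rewrite -(psiF_sem (N:=n) (h:=g) (c:=b) (e':=fun v => b (gidx (e v)))); last first.
    move=> v hv; by split; [case: (Hg v hv)|].
  have fr : forall v, ffree v (psiF n g phi) -> v < n.
    move=> v; apply: psiF_free => u hu; by case: (Hg u hu).
  rewrite -!(elem_sat HM) => [|v /fr hv|v /fr hv]; [|exact: hb|exact: ha].
  exact: hs.
Qed.

End Conv.

Lemma In_mapP (X Y : Type) (f : X -> Y) (l : seq X) y :
  In y (map f l) <-> exists x, f x = y /\ In x l.
Proof.
elim: l => [|x l IH] /=; first by split => // [[x []]].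
split => [[<-|/IH [z [ez hz]]]|[z [ez [exz|hz]]]].
- by exists x; split => //; left.
- by exists z; split => //; right.
- by left; rewrite exz.
- right; apply/IH; by exists z.
Qed.

Section Card.
Variable L : signature.

Definition enc_nat (k : nat) : form L := Fex k Ffalse.
Lemma enc_nat_inj : injective enc_nat.
Proof. by move=> x y [->]. Qed.

Fixpoint idx {X : Type} (x : X) (l : seq X) : nat :=
  match l with
  | [::] => 0
  | y :: l' => if excluded_middle_informative (x = y) then 0 else (idx x l').+1
  end.

Lemma idx_inj {X : Type} (l : seq X) x y : In x l -> In y l -> idx x l = idx y l -> x = y.
Proof.
elim: l => [|z l IH] //= hx hy.
case: excluded_middle_informative => ex; case: excluded_middle_informative => ey //.
- by move=> _; rewrite ex ey.
- move=> [] /IH; apply.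
  + by case: hx => [e|//]; case: ex.
  + by case: hy => [e|//]; case: ey.
Qed.

Lemma card_list {X : Type} (l : seq X) : card_le_set (fun x => In x l) (form L).
Proof.
exists (fun x => enc_nat (idx x l)) => x y hx hy /enc_nat_inj; exact: idx_inj.
Qed.

Lemma card_union {X : Type} (A B : X -> Prop) :
  card_le_set A (form L) -> card_le_set B (form L) ->
  card_le_set (fun x => A x \/ B x) (form L).
Proof.
move=> [iA hA] [iB hB].
exists (fun x => if excluded_middle_informative (A x) then Fand Ffalse (iA x) else Fneg (iB x)).
move=> x y hx hy; case: excluded_middle_informative => ax; case: excluded_middle_informative => ay //.
- by move=> [] /hA; apply.
- move=> [] /hB; apply; by [case: hx|case: hy].
Qed.

Lemma card_nat {X : Type} (A : X -> Prop) : card_le_set A nat -> card_le_set A (form L).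
Proof. move=> [f hf]; exists (fun x => enc_nat (f x)) => x y hx hy /enc_nat_inj; exact: hf. Qed.

Lemma card_sub {X : Type} (A B : X -> Prop) :
  (forall x, A x -> B x) -> card_le_set B (form L) -> card_le_set A (form L).
Proof. move=> h [f hf]; exists f => x y hx hy; apply: hf; exact: h. Qed.

End Card.

Section Constr.
Variable L : signature.
Variable C : structure L.
Variable K : Type.
Hypothesis HK : large_for L K.
Hypothesis Hsh : strongly_homogeneous C K.
Let x0 := some_elt _ C.

Definition envl (l : seq C) : nat -> C := fun v => nth x0 l v.

Definition wit (w : nat) (p : form L) (l : seq C) : C :=
  epsilon (inhabits x0) (fun d => sat C (upd (envl l) w d) p).

Definition tau (l1 l2 : seq C) : C -> C :=
  epsilon (inhabits id) (fun s => is_aut (fun _ => True) s /\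
     (Pmap l1 l2 -> forall i, i < size l1 -> s (nth x0 l1 i) = nth x0 l2 i)).

Lemma id_aut : is_aut (fun _ : C => True) id.
Proof.
split => //; split => //; split; first by move=> y _; exists y.
by split.
Qed.

Lemma tau_spec l1 l2 : is_aut (fun _ => True) (tau l1 l2) /\
     (Pmap l1 l2 -> forall i, i < size l1 -> tau l1 l2 (nth x0 l1 i) = nth x0 l2 i).
Proof.
apply: (epsilon_spec (inhabits id) (fun s => is_aut (fun _ => True) s /\
     (Pmap l1 l2 -> forall i, i < size l1 -> s (nth x0 l1 i) = nth x0 l2 i))).
case: (classic (Pmap l1 l2)) => hP; last by exists id; split => //; exact: id_aut.
have hP' := hP; case: hP' => [sz [f [hf he]]].
have [s [hs hsf]] := Hsh (card_lt HK (card_list L l1)) he.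
exists s; split => // _ i hi; rewrite hsf ?hf //; exact: In_nth.
Qed.

Definition tauinv (l1 l2 : seq C) (y : C) : C :=
  epsilon (inhabits x0) (fun x => tau l1 l2 x = y).

Lemma tauinvK l1 l2 y : tau l1 l2 (tauinv l1 l2 y) = y.
Proof.
apply: (epsilon_spec (inhabits x0) (fun x => tau l1 l2 x = y)).
have [[_ [_ [hs _]]] _] := tau_spec l1 l2.
have [x [_ hx]] := hs y I; by exists x.
Qed.

Inductive Mset (S : C -> Prop) : C -> Prop :=
| Ms0 : Mset S x0
| MsS x : S x -> Mset S x
| MsW w p l : (forall y, In y l -> Mset S y) -> Mset S (wit w p l)
| MsT l1 l2 (b : bool) x : (forall y, In y l1 -> Mset S y) -> (forall y, In y l2 -> Mset S y) ->
    Mset S x -> Mset S (if b then tau l1 l2 x else tauinv l1 l2 x).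

Variable S : C -> Prop.

Lemma Mset_W w p e : (forall v, ffree v (Fex w p) -> Mset S (e v)) -> sat C e (Fex w p) ->
  exists d, Mset S d /\ sat C (upd e w d) p.
Proof.
move=> he hs.
pose B := fbound (Fex w p).
pose l := map (fun v => if excluded_middle_informative (ffree v (Fex w p)) then e v else x0) (iota 0 B).
have hl : forall v, ffree v (Fex w p) -> envl l v = e v.
  move=> v hv; rewrite /envl /l (nth_map 0); last by rewrite size_iota; exact: fbound_spec.
  rewrite nth_iota ?add0n; last exact: fbound_spec.
  by case: excluded_middle_informative.
have hs' : sat C (envl l) (Fex w p) by rewrite /sat (sat_coinc _ hl).
have hw : sat C (upd (envl l) w (wit w p l)) p.
  apply: (epsilon_spec (inhabits x0) (fun d => sat C (upd (envl l) w d) p)); case: hs' => d [_ hd]; by exists d.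
exists (wit w p l); split.
- apply: (@MsW S w p l) => y. rewrite /l In_mapP => [[v [<- _]]].
  destruct (excluded_middle_informative _) as [hv|hv]; [exact: he|exact: Ms0].
- move: hw; rewrite /sat; apply: (proj1 (sat_coinc _ _)) => v hv.
  rewrite /upd; case: eqP => // /eqP ne; apply: hl; split => //; exact/eqP.
Qed.

Lemma Mset_elem : elem_sub (Mset S).
Proof.
split; first by exists x0; exact: Ms0.
split.
- move=> f a ha.
  pose e := fun v => match v with 0 => x0 | j.+1 => merge a (fun _ => x0) j end.
  pose phi := Fex 0 (Feq (tvar 0) (tapp f (fun i => tvar (nat_of_ord i).+1))).
  have he : forall v, ffree v phi -> Mset S (e v).
    move=> v /= [ne [e0|[i ei]]]; first by case: (ne e0).
    subst v; rewrite /e merge_lt; exact: ha.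
  have hs : sat C e phi.
    exists (fint f a); split => //; rewrite /= /upd /=.
    congr (fint f _); apply: functional_extensionality => i.
    rewrite /e merge_lt; congr a; exact: val_inj.
  have [d [Md hd]] := Mset_W he hs.
  move: hd; rewrite /sat /= /upd /= => hd.
  have E : (fun i : 'I_(fn_ar f) => e (nat_of_ord i).+1) = a.
    apply: functional_extensionality => i; rewrite /e merge_lt; congr a; exact: val_inj.
  by rewrite -E -hd.
- apply: TV => w p e he hs; exact: Mset_W.
Qed.
End Constr.

Section Codes.
Variable L : signature.

Inductive code : Type :=
| c0 : code
| cS : form L -> code
| cW : nat -> form L -> codes -> code
| cT : codes -> codes -> bool -> code -> code
with codes : Type :=
| cnil : codes
| ccons : code -> codes -> codes.

Scheme code_ind2 := Induction for code Sort Prop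
with codes_ind2 := Induction for codes Sort Prop.

Fixpoint enc (c : code) : form L :=
  match c with
  | c0 => Ffalse
  | cS phi => Fneg phi
  | cW w p cs => Fex w (Fand p (encs cs))
  | cT cs1 cs2 b c => Fand (encs cs1) (Fand (encs cs2)
                        (Fand (if b then Ffalse else Fneg Ffalse) (enc c)))
  end
with encs (cs : codes) : form L :=
  match cs with
  | cnil => Ffalse
  | ccons c cs => Fand (enc c) (encs cs)
  end.

Lemma enc_inj_all :
  (forall c c', enc c = enc c' -> c = c') /\ (forall cs cs', encs cs = encs cs' -> cs = cs').
Proof.
pose P (c : code) := forall c', enc c = enc c' -> c = c'.
pose Q (cs : codes) := forall cs', encs cs = encs cs' -> cs = cs'.
have H : (forall c, P c) /\ (forall cs, Q cs).
  split.
  - apply: (code_ind2 (P := P) (P0 := Q)); rewrite /P /Q.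
    + by case.
    + by move=> phi [] //= ? [->].
    + by move=> w p cs IH [] //= w' p' cs' [-> -> /IH ->].
    + move=> cs1 IH1 cs2 IH2 b c IH [] //= cs1' cs2' b' c' [/IH1 -> /IH2 -> hb /IH ->].
      by case: b b' hb => [] [].
    + by case.
    + by move=> c IH cs IHs [] //= c' cs' [/IH -> /IHs ->].
  - apply: (codes_ind2 (P := P) (P0 := Q)); rewrite /P /Q.
    + by case.
    + by move=> phi [] //= ? [->].
    + by move=> w p cs IH [] //= w' p' cs' [-> -> /IH ->].
    + move=> cs1 IH1 cs2 IH2 b c IH [] //= cs1' cs2' b' c' [/IH1 -> /IH2 -> hb /IH ->].
      by case: b b' hb => [] [].
    + by case.
    + by move=> c IH cs IHs [] //= c' cs' [/IH -> /IHs ->].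
exact: H.
Qed.

End Codes.

Section MProps.
Variable L : signature.
Variable C : structure L.
Variable K : Type.
Hypothesis HK : large_for L K.
Hypothesis Hsh : strongly_homogeneous C K.
Let x0 := some_elt _ C.
Variable S : C -> Prop.
Hypothesis cS_ : card_le_set S (form L).

Let iS := projT1 (constructive_indefinite_description _ cS_).
Let iSI : forall x y, S x -> S y -> iS x = iS y -> x = y :=
  projT2 (constructive_indefinite_description _ cS_).

Definition decS (phi : form L) : C := epsilon (inhabits x0) (fun x => S x /\ iS x = phi).

Fixpoint dec (c : code L) : C :=
  match c with
  | c0 => x0
  | cS phi => decS phi
  | cW w p cs => wit w p (decs cs)
  | cT cs1 cs2 b c => if b then tau (decs cs1) (decs cs2) (dec c)
                      else tauinv (decs cs1) (decs cs2) (dec c)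
  end
with decs (cs : codes L) : seq C :=
  match cs with
  | cnil => [::]
  | ccons c cs => dec c :: decs cs
  end.

Lemma list_codes (l : seq C) : (forall y, In y l -> exists c, dec c = y) ->
  exists cs, decs cs = l.
Proof.
elim: l => [|x l IH] h; first by exists (cnil L).
have [c hc] := h x (or_introl erefl).
have [cs hcs] := IH (fun y hy => h y (or_intror hy)).
by exists (ccons c cs); rewrite /= hc hcs.
Qed.

Lemma Mset_code x : Mset S x -> exists c, dec c = x.
Proof.
elim => [|y Sy|w p l _ IH|l1 l2 b y _ IH1 _ IH2 _ IH].
- by exists (c0 L).
- exists (cS (iS y)); rewrite /= /decS.
  have := epsilon_spec (inhabits x0) (fun x => S x /\ iS x = iS y) (ex_intro _ y (conj Sy erefl)).
  move=> [h1 h2]; exact: iSI.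
- have [cs hcs] := list_codes IH; exists (cW w p cs); by rewrite /= hcs.
- have [cs1 h1] := list_codes IH1; have [cs2 h2] := list_codes IH2.
  have [c hc] := IH; exists (cT cs1 cs2 b c); by rewrite /= h1 h2 hc.
Qed.

Lemma Mset_card : card_le_set (Mset S) (form L).
Proof.
exists (fun x => enc (epsilon (inhabits (c0 L)) (fun c => dec c = x))).
move=> x y hx hy /(proj1 (enc_inj_all L)) h.
have ex := epsilon_spec (inhabits (c0 L)) (fun c => dec c = x) (Mset_code hx).
have ey := epsilon_spec (inhabits (c0 L)) (fun c => dec c = y) (Mset_code hy).
by rewrite -ex -ey h.
Qed.

Lemma tau_Maut l1 l2 : (forall y, In y l1 -> Mset S y) -> (forall y, In y l2 -> Mset S y) ->
  is_aut (Mset S) (tau l1 l2).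
Proof.
move=> h1 h2.
have [[_ [hI [hsur [hf hr]]]] _] := tau_spec HK Hsh l1 l2.
split; first by move=> x hx; exact: (MsT true h1 h2 hx).
split; first by move=> x y _ _; apply: hI.
split.
- move=> y hy; exists (tauinv l1 l2 y); split; last exact: (tauinvK HK Hsh).
  exact: (MsT false h1 h2 hy).
- split => [f a _|r a _]; [exact: hf|exact: hr].
Qed.

Lemma Mset_strong : strongly_aleph0_homogeneous (Mset S).
Proof.
move=> n a b ha hb hs.
have HP := same_Pmap (Mset_elem S) ha hb hs.
have h1 : forall y, In y (map a (iota 0 n)) -> Mset S y.
  by move=> y /In_map_iota [i [hi <-]]; exact: ha.
have h2 : forall y, In y (map b (iota 0 n)) -> Mset S y.
  by move=> y /In_map_iota [i [hi <-]]; exact: hb.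
exists (tau (map a (iota 0 n)) (map b (iota 0 n))); split; first exact: tau_Maut.
move=> i hi; have [_ h] := tau_spec HK Hsh (map a (iota 0 n)) (map b (iota 0 n)).
have := h HP i; rewrite size_map size_iota => /(_ hi).
by rewrite !nth_map_iota.
Qed.

Lemma Mset_close (l : seq C) s : (forall y, In y l -> Mset S y) ->
  is_aut (fun _ => True) s -> (forall y, In y l -> Mset S (s y)) ->
  exists t, is_aut (Mset S) t /\ forall y, In y l -> t y = s y.
Proof.
move=> hl hs hsl.
have h2 : forall y, In y (map s l) -> Mset S y by move=> y /In_mapP [x [<- hx]]; exact: hsl.
have HP : Pmap l (map s l).
  split; first by rewrite size_map.
  exists s; split; first by move=> i hi; rewrite (nth_map x0).
  move=> phi e _; exact: aut_elem.
exists (tau l (map s l)); split; first exact: tau_Maut.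
move=> y hy.
have [i [hi ei]] : exists i, i < size l /\ nth x0 l i = y.
  elim: l hy {hl hsl h2 HP} => [|z l IH] //= [->|/IH [i [hi ei]]]; first by exists 0.
  by exists i.+1.
have [_ h] := tau_spec HK Hsh l (map s l).
by rewrite -ei (h HP i hi) (nth_map x0).
Qed.

End MProps.

Section Ulim.
Local Open Scope R_scope.
Variable J : Type.
Variable U : (J -> Prop) -> Prop.
Hypothesis UI : forall X Y, U X -> U Y -> U (fun j => X j /\ Y j).
Hypothesis US : forall X Y : J -> Prop, (forall j, X j -> Y j) -> U X -> U Y.
Hypothesis U0 : ~ U (fun _ => False).
Hypothesis Uu : forall X, U X \/ U (fun j => ~ X j).

Lemma UT : U (fun _ => True).
Proof. by case: (Uu (fun _ => True)) => h; [|apply: US h]. Qed.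

Lemma Une X : U X -> exists j, X j.
Proof.
move=> h; apply: NNPP => hn; apply: U0; apply: US h => j xj; apply: hn; by exists j.
Qed.

Definition clamp (r : R) := Rmin 1 (Rmax 0 r).

Lemma clamp_le1 r : clamp r <= 1.
Proof. rewrite /clamp; apply: Rmin_l. Qed.

Lemma clamp_id r : 0 <= r <= 1 -> clamp r = r.
Proof.
move=> [h1 h2]; rewrite /clamp Rmax_right // Rmin_right //.
Qed.

Lemma clamp_ge0 r : 0 <= clamp r.
Proof.
rewrite /clamp; apply: Rmin_glb; [lra|apply: Rmax_l].
Qed.

Definition Eset (f : J -> R) : R -> Prop := fun r => U (fun j => r <= clamp (f j)).

Lemma Eset_bound f : bound (Eset f).
Proof.
exists 1 => r hr; apply: Rnot_lt_le => h; apply: U0; apply: US hr => j hj.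
have := clamp_le1 (f j); lra.
Qed.

Lemma Eset_ne f : exists x, Eset f x.
Proof. exists 0; apply: US UT => j _; exact: clamp_ge0. Qed.

Definition ulim (f : J -> R) : R := proj1_sig (completeness _ (Eset_bound f) (Eset_ne f)).

Lemma ulim_lub f : is_lub (Eset f) (ulim f).
Proof. exact: proj2_sig (completeness _ (Eset_bound f) (Eset_ne f)). Qed.

Definition conv (f : J -> R) (l : R) := forall eps, 0 < eps -> U (fun j => Rabs (f j - l) < eps).

Lemma ulim_conv f : U (fun j => 0 <= f j <= 1) -> conv f (ulim f).
Proof.
move=> hb eps he; have [ub lub] := ulim_lub f.
have h1 : U (fun j => ulim f - eps < f j).
  have [r [Er hr]] : exists r, Eset f r /\ ulim f - eps < r.
    apply: NNPP => hn; have : ulim f <= ulim f - eps; last lra.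
    apply: lub => r Er; apply: Rnot_lt_le => hr; apply: hn; by exists r.
  apply: US (UI Er hb) => j [hj hbj]; rewrite clamp_id // in hj; lra.
have h2 : U (fun j => f j < ulim f + eps).
  case: (Uu (fun j => f j < ulim f + eps)) => // hn.
  have : Eset f (ulim f + eps).
    apply: US (UI hn hb) => j [hj hbj]; rewrite clamp_id //; lra.
  move/ub; lra.
apply: US (UI h1 h2) => j [hj1 hj2]; apply: Rabs_def1; lra.
Qed.

Lemma conv_uniq f l1 l2 : conv f l1 -> conv f l2 -> l1 = l2.
Proof.
move=> c1 c2; apply: NNPP => ne.
have hp : 0 < Rabs (l1 - l2) / 2.
  have : 0 < Rabs (l1 - l2) by apply: Rabs_pos_lt => h; apply: ne; lra.
  lra.
have [j [h1 h2]] := Une (UI (c1 _ hp) (c2 _ hp)).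
have := Rabs_triang (l1 - f j) (f j - l2).
rewrite Rabs_minus_sym in h1.
have -> : l1 - f j + (f j - l2) = l1 - l2 by ring.
lra.
Qed.

Lemma ulim_eq f l : U (fun j => 0 <= f j <= 1) -> conv f l -> ulim f = l.
Proof. move=> hb c; apply: conv_uniq c; exact: ulim_conv. Qed.

Lemma ulim_ext f g : U (fun j => 0 <= g j <= 1) -> U (fun j => f j = g j) -> ulim f = ulim g.
Proof.
move=> hg he; apply: ulim_eq.
- by apply: US (UI hg he) => j [h ->].
- move=> eps hp; apply: US (UI (ulim_conv hg hp) he) => j [h ->] //.
Qed.

Lemma ulim_const f c : 0 <= c <= 1 -> U (fun j => f j = c) -> ulim f = c.
Proof.
move=> hc he; apply: ulim_eq.
- by apply: US he => j ->.
- move=> eps hp; apply: US he => j ->; rewrite Rminus_diag Rabs_R0 //.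
Qed.

Lemma ulim_add f g h : U (fun j => 0 <= f j <= 1) -> U (fun j => 0 <= g j <= 1) ->
  U (fun j => 0 <= h j <= 1) -> U (fun j => f j = g j + h j) -> ulim f = ulim g + ulim h.
Proof.
move=> hf hg hh he; apply: ulim_eq => // eps hp.
have hp2 : 0 < eps / 2 by lra.
apply: US (UI (UI (ulim_conv hg hp2) (ulim_conv hh hp2)) he) => j [[h1 h2] ->].
have := Rabs_triang (g j - ulim g) (h j - ulim h).
have -> : g j - ulim g + (h j - ulim h) = g j + h j - (ulim g + ulim h) by ring.
lra.
Qed.

Lemma ulim_ge0 f : 0 <= ulim f.
Proof.
have [ub _] := ulim_lub f; apply: ub; apply: US UT => j _; exact: clamp_ge0.
Qed.

End Ulim.

Section AB.
Variable L : signature.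
Variable C : structure L.
Variable K : Type.
Hypothesis HK : large_for L K.
Hypothesis Hsh : strongly_homogeneous C K.
Variable n : nat.
Variable pi : form L -> Prop.
Variable M : C -> Prop.
Hypothesis HM : elem_sub M.
Hypothesis cM : card_le_set M (form L).
Variable muC : (('I_n -> C) -> Prop) -> R.
Hypothesis kC : keisler_measure (fun _ : C => True) n muC.
Hypothesis eC : extends_type (fun _ : C => True) n pi muC.
Hypothesis iC : aut_invariant (fun _ : C => True) n muC.

Let T := (fun _ : C => True).

Definition pickM (X : ('I_n -> C) -> Prop) : form L * (nat -> C) :=
  epsilon (inhabits (Ffalse, fun _ => some_elt _ C))
    (fun p => params_in M n p.1 p.2 /\ forall a, X a <-> defset M n p.1 p.2 a).

Lemma pickM_spec X : definable M n X ->
  params_in M n (pickM X).1 (pickM X).2 /\ forall a, X a <-> defset M n (pickM X).1 (pickM X).2 a.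
Proof.
move=> [phi [e h]]; apply: (epsilon_spec (inhabits _)
  (fun p => params_in M n p.1 p.2 /\ forall a, X a <-> defset M n p.1 p.2 a)).
by exists (phi, e).
Qed.

Definition muM (X : ('I_n -> C) -> Prop) : R := muC (defset T n (pickM X).1 (pickM X).2).

Lemma KeyWD phi e psi e' : params_in M n phi e -> params_in M n psi e' ->
  (forall a, defset M n phi e a <-> defset M n psi e' a) ->
  muC (defset T n phi e) = muC (defset T n psi e').
Proof.
move=> h1 h2 h; apply: (km_ext kC); first exact: defset_def.
move=> a; rewrite /defset; apply: and_iff_compat_l; exact: (WD HM h1 h2 h).
Qed.

Lemma muM_def phi e : params_in M n phi e -> muM (defset M n phi e) = muC (defset T n phi e).
Proof.
move=> h; have [h1 h2] := pickM_spec (defset_def h).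
rewrite /muM; apply: KeyWD => // a; by rewrite -h2.
Qed.

Lemma muM_ext X Y : definable M n X -> (forall a, X a <-> Y a) -> muM X = muM Y.
Proof.
move=> dX hXY.
have dY : definable M n Y.
  case: dX => [phi [e [hp hX]]]; exists phi, e; split => // a; rewrite -hXY; exact: hX.
have [h1 h2] := pickM_spec dX; have [h3 h4] := pickM_spec dY.
rewrite /muM; apply: KeyWD => // a; by rewrite -h2 -h4.
Qed.

Lemma AtoB_main : inv_keisler_ext M n pi.
Proof.
have [x0 Mx0] : exists x, M x by case: HM.
exists muM; split; [|split].
- split; [|split; [|split]].
  + move=> X Y dX _ h; exact: muM_ext.
  + move=> X dX; have [h1 h2] := pickM_spec dX.
    case: kC => [_ [h _]]; apply: h; exact: defset_def.
  + set e0 := fun _ : nat => x0.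
    have p0 : params_in M n (Fneg Ffalse) e0 by [].
    have -> : muM (fun a => forall i, M (a i)) = muM (defset M n (Fneg Ffalse) e0).
      apply: muM_ext; first by exists (Fneg Ffalse), e0; split => // a; rewrite /defset /=; tauto.
      move=> a; rewrite /defset /=; tauto.
    rewrite muM_def //; case: kC => [_ [_ [h1 _]]]; rewrite -h1.
    apply: (km_ext kC); first exact: defset_def.
    move=> a; rewrite /defset /=; tauto.
  + move=> X Y dX dY hXY.
    have [h1 h2] := pickM_spec dX; have [h3 h4] := pickM_spec dY.
    rewrite /muM.
    set phi := (pickM X).1 in h1 h2 *; set e := (pickM X).2 in h1 h2 *.
    set psi := (pickM Y).1 in h3 h4 *; set e' := (pickM Y).2 in h3 h4 *.
    set N := fbound phi; set E := Eenv n N e e'; set psi' := fren (rr n N) psi.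
    have [p1 p2] := params_comb h1 h3.
    have pO : params_in M n (For phi psi') E.
      move=> v hv; rewrite /For /= => [[fv|fv]]; by [apply: p1|apply: p2].
    have hZ : forall a, (X a \/ Y a) <-> defset M n (For phi psi') E a.
      move=> a; rewrite h2 h4 /defset /For /= (comb1 _ _ _ _ (leqnn N)) comb2.
      split => [[[ha s1]|[ha s1]]|[ha s1]]; [split => //; tauto|split => //; tauto|].
      case: (classic (sat_in M (merge a e) phi)) => s2; [left|right]; split => //; tauto.
    rewrite -/(muM _) (muM_ext (Y := defset M n (For phi psi') E)); last first.
      exact: hZ.
      by exists (For phi psi'), E; split => // a; rewrite -hZ.
    rewrite muM_def //.
    have dj : forall a : 'I_n -> C, ~ (sat C (merge a E) phi /\ sat C (merge a E) psi').
      apply: (Disj HM p1 p2) => a [[ha s1] [_ s2]].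
      move: s1 s2; rewrite (comb1 _ _ _ _ (leqnn N)) comb2 => s1 s2.
      apply: (hXY a); rewrite h2 h4; by split; split.
    rewrite (km_ext (Y := fun a => defset T n phi E a \/ defset T n psi' E a) kC).
    * case: kC => [_ [_ [_ hadd]]]; rewrite hadd; try exact: defset_def.
      -- congr Rplus; apply: (km_ext kC); try exact: defset_def.
         ++ move=> a; rewrite /defset; by rewrite (comb1 _ _ _ _ (leqnn N)).
         ++ move=> a; rewrite /defset; by rewrite comb2.
      -- move=> a [[_ s1] [_ s2]]; exact: (dj a).
    * exact: defset_def.
    * move=> a; rewrite /defset /For /=; split => [[_ s]|[[_ s]|[_ s]]].
      -- case: (classic (sat_in T (merge a E) phi)) => s2; [left|right]; split => //; tauto.
      -- split => //; tauto.
      -- split => //; tauto.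
- move=> phi e hp hc; rewrite muM_def //; exact: eC.
- move=> s hs phi e hp.
  have hp' : params_in M n phi (fun v => s (e v)).
    move=> v hv fv; case: hs => [h _]; apply: h; exact: hp.
  rewrite !muM_def //.
  have [t [ht hts]] := aut_ext HK Hsh HM cM hs.
  rewrite -(@iC t ht phi e (fun _ _ _ => I)).
  apply: (km_ext kC); first exact: defset_def.
  move=> a; rewrite /defset; apply: and_iff_compat_l; apply: sat_coinc => v fv.
  case: (ltnP v n) => h; first by rewrite !merge_lt.
  rewrite !merge_ge // hts //; exact: hp.
Qed.

End AB.

Lemma AtoB (L : signature) (C : structure L) (K : Type) (HK : large_for L K)
  (Hsh : strongly_homogeneous C K) n pi :
  amenable C n pi -> forall M : C -> Prop, elem_sub M -> card_le_set M (form L) -> inv_keisler_ext M n pi.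
Proof.
move=> [mu [k [e i]]] M HM cM; exact: (AtoB_main HK Hsh HM cM k e i).
Qed.

Lemma In_cat (X : Type) (x : X) s1 s2 : In x (s1 ++ s2) <-> In x s1 \/ In x s2.
Proof.
elim: s1 => [|y s1 IH] /=; first by split => [h|[[]|h]] //; right.
rewrite IH; tauto.
Qed.

Lemma In_flatten (X : Type) (x : X) ls : In x (flatten ls) <-> exists l, In l ls /\ In x l.
Proof.
elim: ls => [|l ls IH] /=; first by split => // [[l [[] _]]].
rewrite In_cat IH; split => [[h|[l' [h1 h2]]]|[l' [[<-|h1] h2]]].
- by exists l; split => //; left.
- by exists l'; split => //; right.
- by left.
- by right; exists l'.
Qed.

Lemma In_mem (s : seq nat) v : v \in s -> In v s.
Proof. elim: s => [|w s IH] //=; rewrite inE => /orP [/eqP ->|/IH h]; by [left|right]. Qed.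

Lemma mem_In (s : seq nat) v : In v s -> v \in s.
Proof. elim: s => [|w s IH] //= [->|h]; rewrite inE ?eqxx // IH ?orbT //. Qed.

Lemma km_le1 (L : signature) (C : structure L) (D : C -> Prop) n (mu : (('I_n -> C) -> Prop) -> R) (phi : form L) e :
  keisler_measure D n mu -> params_in D n phi e -> Rle (mu (defset D n phi e)) R1.
Proof.
move=> k hp; have k' := k; case: k' => [_ [h0 [h1 hadd]]].
have hp' : params_in D n (Fneg phi) e by [].
have := hadd _ _ (defset_def hp) (defset_def hp').
have -> : mu (fun a => defset D n phi e a \/ defset D n (Fneg phi) e a) = mu (fun a => forall i, D (a i)).
  have dU : definable D n (fun a => defset D n phi e a \/ defset D n (Fneg phi) e a).
    exists (For phi (Fneg phi)), e; split.
      move=> v hv /= [f|f]; exact: hp v hv f.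
    move=> a; rewrite /defset /=.
    split; first tauto.
    move=> [hi hn]; case: (classic (sat_in D (merge a e) phi)) => hs; [left|right]; by split.
  apply: (km_ext k dU).
  move=> a; rewrite /defset /=; split; first tauto.
  move=> h; case: (classic (sat_in D (merge a e) phi)) => hs; [left|right]; by split.
rewrite h1 => /(_ _) H.
have : R1 = Rplus (mu (defset D n phi e)) (mu (defset D n (Fneg phi) e)).
  apply: H => a [[_ h2] [_ h3]]; exact: h3.
have := h0 _ (defset_def hp'); lra.
Qed.

Section CA.
Variable L : signature.
Variable C : structure L.
Variable K : Type.
Hypothesis HK : large_for L K.
Hypothesis Hsh : strongly_homogeneous C K.
Variable n : nat.
Variable pi : form L -> Prop.
Variable Good : (C -> Prop) -> Prop.
Hypothesis HG : forall M, elem_sub M -> card_le_set M (form L) ->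
  strongly_aleph0_homogeneous M -> Good M.
Variable A : C -> Prop.
Hypothesis cA : card_le_set A (form L).
Hypothesis HA : forall M, Good M -> (forall x, A x -> M x) -> inv_keisler_ext M n pi.

Let x0 := some_elt _ C.
Definition J := seq (form L * (nat -> C)).
Definition plist (j : J) : seq C := flatten (map (fun q => map q.2 (fvf q.1)) j).
Definition Sj (j : J) : C -> Prop := fun x => A x \/ In x (plist j).
Definition Mj (j : J) : C -> Prop := Mset (Sj j).

Lemma Sj_card j : card_le_set (Sj j) (form L).
Proof. apply: card_union => //; exact: card_list. Qed.

Lemma Mj_elem j : elem_sub (Mj j).
Proof. exact: Mset_elem. Qed.

Lemma Mj_good j : Good (Mj j).
Proof.
apply: HG; [exact: Mj_elem|exact: Mset_card (Sj_card j)|exact: (Mset_strong HK Hsh)].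
Qed.

Lemma Mj_A j x : A x -> Mj j x.
Proof. move=> h; apply: MsS; by left. Qed.

Definition goodmu (j : J) (mu : (('I_n -> C) -> Prop) -> R) :=
  keisler_measure (Mj j) n mu /\ extends_type (Mj j) n pi mu /\ aut_invariant (Mj j) n mu.

Definition muj (j : J) := epsilon (inhabits (fun _ => R0)) (goodmu j).

Lemma muj_spec j : goodmu j (muj j).
Proof.
apply: (epsilon_spec (inhabits (fun _ => R0)) (goodmu j)).
exact: (HA (Mj_good j) (@Mj_A j)).
Qed.

Definition nu (j : J) (q : form L * (nat -> C)) : R := muj j (defset (Mj j) n q.1 q.2).

Lemma inj_M j q : In q j -> forall v, ffree v q.1 -> Mj j (q.2 v).
Proof.
move=> hq v hv; apply: MsS; right; apply/In_flatten.
exists (map q.2 (fvf q.1)); split; first by apply/In_mapP; exists q.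
apply/In_mapP; exists v; split => //; apply: In_mem; exact/fvf_spec.
Qed.

Lemma inj_params j q : In q j -> params_in (Mj j) n q.1 q.2.
Proof. move=> hq v _; exact: inj_M. Qed.

Definition csat (q : form L * (nat -> C)) (a : 'I_n -> C) := sat C (merge a q.2) q.1.

Lemma nu_restr j q : In q j -> forall a,
  defset (Mj j) n q.1 q.2 a <-> (forall i, Mj j (a i)) /\ csat q a.
Proof. move=> hq; exact: restr (Mj_elem j) _ _ _ (inj_params hq). Qed.

Lemma P0 j q : In q j -> Rle R0 (nu j q) /\ Rle (nu j q) R1.
Proof.
move=> hq; have [k _] := muj_spec j; split.
- case: k => [_ [h _]]; apply: h; exact: defset_def (inj_params hq).
- exact: km_le1 k (inj_params hq).
Qed.

Lemma P1 j q1 q2 : In q1 j -> In q2 j -> (forall a, csat q1 a <-> csat q2 a) -> nu j q1 = nu j q2.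
Proof.
move=> h1 h2 he; have [k _] := muj_spec j.
apply: (km_ext k (defset_def (inj_params h1))) => a.
by rewrite (nu_restr h1) (nu_restr h2) he.
Qed.

Lemma P2 j q : In q j -> (forall a, csat q a) -> nu j q = R1.
Proof.
move=> h he; have [k _] := muj_spec j.
have k' := k; case: k' => [_ [_ [h1 _]]]; rewrite -h1.
apply: (km_ext k (defset_def (inj_params h))) => a.
rewrite (nu_restr h); split => [[]//|ha]; split => //.
Qed.

Lemma P3 j q1 q2 q3 : In q1 j -> In q2 j -> In q3 j ->
  (forall a, csat q3 a <-> csat q1 a \/ csat q2 a) -> (forall a, ~ (csat q1 a /\ csat q2 a)) ->
  nu j q3 = Rplus (nu j q1) (nu j q2).
Proof.
move=> h1 h2 h3 hu hd; have [k _] := muj_spec j.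
have k' := k; case: k' => [_ [_ [_ hadd]]].
rewrite /nu -hadd; first last.
- move=> a []; rewrite (nu_restr h1) (nu_restr h2) => [[_ s1] [_ s2]]; exact: (hd a).
- exact: defset_def (inj_params h2).
- exact: defset_def (inj_params h1).
apply: (km_ext k (defset_def (inj_params h3))) => a.
rewrite (nu_restr h1) (nu_restr h2) (nu_restr h3) hu; tauto.
Qed.

Lemma P4 j q : In q j -> ~ consistent_with n pi q.1 q.2 -> nu j q = R0.
Proof.
move=> h hc; have [_ [he _]] := muj_spec j; apply: he => //; exact: inj_params.
Qed.

Lemma P5 j (phi : form L) e s : is_aut (fun _ => True) s ->
  In (phi, e) j -> In (phi, fun v => s (e v)) j -> nu j (phi, fun v => s (e v)) = nu j (phi, e).
Proof.
move=> hs h1 h2; have [k [_ hi]] := muj_spec j.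
have hl : forall y, In y (map e (fvf phi)) -> Mj j y.
  move=> y /In_mapP [v [<- hv]]; apply: (inj_M h1); apply/fvf_spec; exact: mem_In.
have hsl : forall y, In y (map e (fvf phi)) -> Mj j (s y).
  move=> y /In_mapP [v [<- hv]]; apply: (inj_M h2 (v:=v)); apply/fvf_spec; exact: mem_In.
have [t [ht hts]] := Mset_close HK Hsh hl hs hsl.
rewrite /nu /= -(hi t ht phi e (inj_params h1)).
apply: (km_ext k (defset_def (inj_params h2))) => a.
rewrite /defset; apply: and_iff_compat_l; apply: sat_coinc => v hv.
case: (ltnP v n) => hvn; first by rewrite !merge_lt.
rewrite !merge_ge // hts //; apply/In_mapP; exists v; split => //; apply: In_mem; exact/fvf_spec.
Qed.



Section Lim.
Variable U : (J -> Prop) -> Prop.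
Hypothesis UI : forall X Y, U X -> U Y -> U (fun j => X j /\ Y j).
Hypothesis US : forall X Y : J -> Prop, (forall j, X j -> Y j) -> U X -> U Y.
Hypothesis U0 : ~ U (fun _ => False).
Hypothesis Uu : forall X, U X \/ U (fun j => ~ X j).
Hypothesis UF : forall qs : J, U (fun j => forall q, In q qs -> In q j).

Lemma Uin (qs : J) (P : J -> Prop) : (forall j, (forall q, In q qs -> In q j) -> P j) -> U P.
Proof. move=> h; exact: US h (UF qs). Qed.

Definition pickC (X : ('I_n -> C) -> Prop) : form L * (nat -> C) :=
  epsilon (inhabits (Ffalse, fun _ => x0)) (fun q => forall a, X a <-> csat q a).

Lemma pickC_spec X : definable (fun _ : C => True) n X -> forall a, X a <-> csat (pickC X) a.
Proof.
move=> [phi [e [_ h]]].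
apply: (epsilon_spec (inhabits (Ffalse, fun _ => x0)) (fun q => forall a, X a <-> csat q a)).
exists (phi, e) => a; rewrite h /defset /csat /=; split => [[]//|h']; by split.
Qed.

Definition muF (X : ('I_n -> C) -> Prop) : R := ulim US U0 Uu (fun j => nu j (pickC X)).

Lemma P0U q : U (fun j => Rle R0 (nu j q) /\ Rle (nu j q) R1).
Proof. apply: (Uin (qs := [:: q])) => j h; apply: P0; apply: h; by left. Qed.

Lemma muF_q X q : definable (fun _ : C => True) n X -> (forall a, X a <-> csat q a) ->
  muF X = ulim US U0 Uu (fun j => nu j q).
Proof.
move=> dX hX; apply: ulim_ext => //; first exact: P0U.
apply: (Uin (qs := [:: pickC X; q])) => j h; apply: P1.
- apply: h; by left.
- apply: h; right; by left.
- move=> a; by rewrite -pickC_spec.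
Qed.

Lemma defC phi e : definable (fun _ : C => True) n (defset (fun _ => True) n phi e).
Proof. exact: defset_def. Qed.

Lemma csat_def phi e a : defset (fun _ : C => True) n phi e a <-> csat (phi, e) a.
Proof. rewrite /defset /csat /=; split => [[]//|h]; by split. Qed.

Theorem muF_good : keisler_measure (fun _ : C => True) n muF /\
  extends_type (fun _ : C => True) n pi muF /\ aut_invariant (fun _ : C => True) n muF.
Proof.
split; [|split].
- split; [|split; [|split]].
  + move=> X Y dX dY hXY; rewrite (muF_q dX (pickC_spec dX)) (muF_q dY (pickC_spec dY)).
    apply: ulim_ext => //; first exact: P0U.
    apply: (Uin (qs := [:: pickC X; pickC Y])) => j h; apply: P1.
    * apply: h; by left.
    * apply: h; right; by left.
    * move=> a; by rewrite -!pickC_spec.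
  + move=> X _; exact: ulim_ge0.
  + have dF : definable (fun _ : C => True) n (fun a => forall i, True).
      exists (Fneg Ffalse), (fun _ => x0); split => // a; rewrite /defset /=; tauto.
    rewrite /muF; apply: ulim_const => //; first lra.
    apply: (Uin (qs := [:: pickC (fun a => forall i, True)])) => j h; apply: P2.
    * apply: h; by left.
    * move=> a; rewrite -pickC_spec //.
  + move=> X Y dX dY hXY.
    set q1 := pickC X; set q2 := pickC Y.
    have hX := pickC_spec dX; have hY := pickC_spec dY.
    set N := fbound q1.1; set E := Eenv n N q1.2 q2.2; set psi' := fren (rr n N) q2.1.
    set q3 := (For q1.1 psi', E).
    have h3 : forall a, csat q3 a <-> csat q1 a \/ csat q2 a.
      move=> a; rewrite /csat /For /sat /= (comb1 _ _ _ _ (leqnn N)) comb2.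
      split; last tauto.
      move=> h; case: (classic (sat_in (fun _ => True) (merge a q1.2) q1.1)) => hh; [left|right] => //; tauto.
    have dZ : definable (fun _ : C => True) n (fun a => X a \/ Y a).
      exists q3.1, q3.2; split => // a; rewrite csat_def -surjective_pairing h3 -hX -hY //.
    rewrite (muF_q dZ (q := q3)); last by move=> a; rewrite h3 -hX -hY.
    rewrite (muF_q dX (pickC_spec dX)) (muF_q dY (pickC_spec dY)).
    apply: ulim_add => //; try exact: P0U.
    apply: (Uin (qs := [:: q1; q2; q3])) => j h; apply: P3.
    * apply: h; by left.
    * apply: h; right; by left.
    * apply: h; right; right; by left.
    * exact: h3.
    * move=> a; rewrite -hX -hY; exact: hXY.
- move=> phi e _ hc.
  rewrite (muF_q (defC phi e) (q := (phi, e))); last by move=> a; rewrite csat_def.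
  apply: ulim_const => //; first lra.
  apply: (Uin (qs := [:: (phi, e)])) => j h; apply: P4 => //; apply: h; by left.
- move=> s hs phi e _.
  rewrite (muF_q (defC phi _) (q := (phi, fun v => s (e v)))); last by move=> a; rewrite csat_def.
  rewrite (muF_q (defC phi e) (q := (phi, e))); last by move=> a; rewrite csat_def.
  apply: ulim_ext => //; first exact: P0U.
  apply: (Uin (qs := [:: (phi, e); (phi, fun v => s (e v))])) => j h; apply: P5 => //.
  + apply: h; by left.
  + apply: h; right; by left.
Qed.

End Lim.
End CA.

Lemma ultra_ex (J : Type) (F : (J -> Prop) -> Prop) :
  F (fun _ => True) ->
  (forall X Y, F X -> F Y -> F (fun j => X j /\ Y j)) ->
  (forall X Y : J -> Prop, (forall j, X j -> Y j) -> F X -> F Y) ->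
  ~ F (fun _ => False) ->
  exists U : (J -> Prop) -> Prop, (forall X, F X -> U X) /\
    (forall X Y, U X -> U Y -> U (fun j => X j /\ Y j)) /\
    (forall X Y : J -> Prop, (forall j, X j -> Y j) -> U X -> U Y) /\
    ~ U (fun _ => False) /\ (forall X, U X \/ U (fun j => ~ X j)).
Proof.
move=> FT FI FS F0.
have PF : filter.ProperFilter F.
  split; first exact: F0.
  split; first exact: FT.
  - move=> A B; exact: FI.
  - move=> P Q PQ; exact: FS.
have [G [GU sFG]] := filter.ultraFilterLemma PF.
exists G; split; first exact: sFG.
have GF : filter.Filter G by case: GU => [[]].
have G0 : ~ G (fun _ => False) by case: GU => [[]].
split; first by move=> X Y; apply: (@filter.filterI _ G GF).
split; first by move=> X Y; apply: (@filter.filterS _ G GF).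
split; first exact: G0.
move=> X; exact: (filter.in_ultra_setVsetC X GU).
Qed.

Lemma CtoA (L : signature) (C : structure L) (K : Type) (HK : large_for L K)
  (Hsh : strongly_homogeneous C K) n pi (Good : (C -> Prop) -> Prop)
  (HG : forall M, elem_sub M -> card_le_set M (form L) -> strongly_aleph0_homogeneous M -> Good M)
  (A : C -> Prop) (cA : card_le_set A (form L))
  (HA : forall M, Good M -> (forall x, A x -> M x) -> inv_keisler_ext M n pi) :
  amenable C n pi.
Proof.
pose F0 := fun X : J C -> Prop => exists j0 : J C, forall j, (forall q, In q j0 -> In q j) -> X j.
have [U [UF [UI [US [U0 Uu]]]]] : exists U : (J C -> Prop) -> Prop, (forall X, F0 X -> U X) /\
    (forall X Y, U X -> U Y -> U (fun j => X j /\ Y j)) /\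
    (forall X Y : J C -> Prop, (forall j, X j -> Y j) -> U X -> U Y) /\
    ~ U (fun _ => False) /\ (forall X, U X \/ U (fun j => ~ X j)).
  apply: ultra_ex.
  - by exists [::].
  - move=> X Y [j0 h0] [j1 h1]; exists (j0 ++ j1) => j h; split.
    + apply: h0 => q hq; apply: h; apply/In_cat; by left.
    + apply: h1 => q hq; apply: h; apply/In_cat; by right.
  - move=> X Y hXY [j0 h0]; exists j0 => j h; apply: hXY; exact: h0.
  - move=> [j0 h0]; exact: (h0 j0).
have UF' : forall qs : J C, U (fun j => forall q, In q qs -> In q j).
  move=> qs; apply: UF; exists qs => j h; exact: h.
exists (muF pi A US U0 Uu).
exact: (muF_good HK Hsh HG cA HA UI US U0 Uu UF').
Qed.

Lemma strong_aleph0 (L : signature) (C : structure L) (M : C -> Prop) :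
  elem_sub M -> strongly_aleph0_homogeneous M -> aleph0_homogeneous M.
Proof.
move=> HM hs n a b ha hb ht c hc.
have [s [hsa hsab]] := hs n a b ha hb ht.
exists (s c); split; first by case: hsa => [h _]; apply: h.
move=> phi hphi.
have hM : forall v, ffree v phi -> M (upd a n c v).
  move=> v /hphi hv; rewrite /upd; case: eqP => // ne; apply: ha.
  have hv' : v <= n := hv; by rewrite ltn_neqAle hv' andbT; apply/eqP.
rewrite (sat_aut hsa (elem_fcl HM) hM).
apply: sat_coinc => v /hphi hv; rewrite /upd; case: eqP => // ne.
apply: hsab; have hv' : v <= n := hv; by rewrite ltn_neqAle hv' andbT; apply/eqP.
Qed.

Lemma cnat_of (L : signature) (X : Type) (M : X -> Prop) :
  countable_lang L -> card_le_set M (form L) -> countable_set M.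
Proof.
move=> [f hf] [g hg]; exists (fun x => f (g x)) => x y hx hy h; apply: hg => //; exact: hf.
Qed.

Lemma empty_card (X Y : Type) (y : Y) : card_le_set (fun _ : X => False) Y.
Proof. by exists (fun _ => y) => x z []. Qed.

Unset Implicit Arguments.
Set Strict Implicit.

Theorem proposition3p4 (L : signature) (T : theory L) (C : structure L) (K : Type)
  (n : nat) (pi : form L -> Prop) :
  complete_theory T -> models C T ->
  large_for L K -> saturated C K -> strongly_homogeneous C K ->
  (forall psi, pi psi -> forall v, ffree v psi -> v < n) ->
  (countable_lang L ->
     (amenable C n pi <->
        (forall M : C -> Prop, elem_sub M -> countable_set M -> aleph0_homogeneous M ->
           inv_keisler_ext M n pi)) /\
     (amenable C n pi <->
        (exists A : C -> Prop, countable_set A /\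
           forall M : C -> Prop, elem_sub M -> countable_set M -> aleph0_homogeneous M ->
             (forall x, A x -> M x) -> inv_keisler_ext M n pi))) /\
  (~ countable_lang L ->
     (amenable C n pi <->
        (forall M : C -> Prop, elem_sub M -> card_le_T L M ->
           strongly_aleph0_homogeneous M -> inv_keisler_ext M n pi)) /\
     (amenable C n pi <->
        (exists A : C -> Prop, card_le_T L A /\
           forall M : C -> Prop, elem_sub M -> card_le_T L M ->
             strongly_aleph0_homogeneous M ->
             (forall x, A x -> M x) -> inv_keisler_ext M n pi))).
Proof.
move=> _ _ HK _ Hsh _; split.
- move=> cL; split; split.
  + move=> Ham M HM cM _; apply: (AtoB HK Hsh Ham HM); exact: card_nat.
  + move=> H.
    apply: (@CtoA L C K HK Hsh n pi (fun M => elem_sub M /\ countable_set M /\ aleph0_homogeneous M) _ (fun _ => False)).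

    * move=> M HM cM hM; split => //; split; [exact: cnat_of cL cM|exact: strong_aleph0].
    * exact: empty_card Ffalse.
    * move=> M [HM [cM hM]] _; exact: H.
  + move=> Ham; exists (fun _ => False); split; first exact: empty_card 0.
    move=> M HM cM _ _; apply: (AtoB HK Hsh Ham HM); exact: card_nat.
  + move=> [A [cA H]].
    apply: (@CtoA L C K HK Hsh n pi (fun M => elem_sub M /\ countable_set M /\ aleph0_homogeneous M) _ (A)).

    * move=> M HM cM hM; split => //; split; [exact: cnat_of cL cM|exact: strong_aleph0].
    * exact: card_nat.
    * move=> M [HM [cM hM]] hA; exact: H.
- move=> _; split; split.
  + move=> Ham M HM cM _; exact: (AtoB HK Hsh Ham HM).
  + move=> H.
    apply: (@CtoA L C K HK Hsh n pi (fun M => elem_sub M /\ card_le_T L M /\ strongly_aleph0_homogeneous M) _ (fun _ => False)).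

    * move=> M HM cM hM; by split.
    * exact: empty_card Ffalse.
    * move=> M [HM [cM hM]] _; exact: H.
  + move=> Ham; exists (fun _ => False); split; first exact: empty_card Ffalse.
    move=> M HM cM _ _; exact: (AtoB HK Hsh Ham HM).
  + move=> [A [cA H]].
    apply: (@CtoA L C K HK Hsh n pi (fun M => elem_sub M /\ card_le_T L M /\ strongly_aleph0_homogeneous M) _ (A)).

    * move=> M HM cM hM; by split.
    * exact: cA.
    * move=> M [HM [cM hM]] hA; exact: H.
Qed.
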